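(* Let $\mathcal P_X,\mathcal P_Y$ be probability measures on a measurable space $(E,\mathcal E)$ with $\mathcal P_Y\ll\mathcal P_X$, let $L=d\mathcal P_Y/d\mathcal P_X$, and assume $L(\mathbf Z)$ has a continuous distribution when $\mathbf Z\sim\mathcal P_X$. Let $\mathbf Z_X,\mathbf Z_X'$ be i.i.d. with law $\mathcal P_X$ and define $\delta:=\mathbb E\,|L(\mathbf Z_X)-L(\mathbf Z_X')|$. Then $$2\,d_{tv}(\mathcal P_X,\mathcal P_Y)\le \delta\le 4\,d_{tv}(\mathcal P_X,\mathcal P_Y).$$
   Context: $d_{tv}(\mathcal P_X,\mathcal P_Y)=\sup_{A\in\mathcal E}|\mathcal P_Y(A)-\mathcal P_X(A)|$ denotes the total variation distance. *)

(* Defs.v *)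
From HB Require Import structures.
From mathcomp Require Import all_boot all_order all_algebra.
From mathcomp Require Import all_classical all_reals all_analysis.
Set Implicit Arguments. Unset Strict Implicit. Unset Printing Implicit Defensive.
Import Order.TTheory GRing.Theory Num.Theory.
Local Open Scope classical_set_scope.
Local Open Scope ring_scope.
Local Open Scope ereal_scope.

Definition dtv (d : measure_display) (T : measurableType d) (R : realType)
  (PX PY : probability T R) : \bar R :=
  ereal_sup [set `|PY A - PX A| | A in [set A | measurable A]].

(* Main.v *)
Require Import Defs.
From HB Require Import structures.
From mathcomp Require Import all_boot all_order all_algebra.
From mathcomp Require Import all_classical all_reals all_analysis.
From mathcomp Require Import measurable_realfun.
From mathcomp Require Import lra ring.
Import Order.TTheory GRing.Theory Num.Theory.
Local Open Scope classical_set_scope.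
Local Open Scope ring_scope.
Local Open Scope ereal_scope.

Lemma intL (d : measure_display) (T : measurableType d) (R : realType)
  (PX PY : probability T R) (L : T -> R) :
  measurable_fun setT L ->
  (forall z, (0 <= L z)%R) ->
  (forall A, measurable A -> PY A = \int[PX]_(z in A) (L z)%:E) ->
  forall A, measurable A -> PX.-integrable A (EFin \o L).
Proof.
move=> mL L0 hY A mA; apply/integrableP; split.
  by apply/measurable_EFinP; exact: measurable_funS mL.
rewrite (eq_integral (fun z => (L z)%:E)); last by move=> z _ /=; rewrite ger0_norm.
by rewrite -hY // (le_lt_trans (probability_le1 PY mA)) // ltry.
Qed.

Lemma intLc (d : measure_display) (T : measurableType d) (R : realType)
  (PX PY : probability T R) (L : T -> R) :
  measurable_fun setT L ->
  (forall z, (0 <= L z)%R) ->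
  (forall A, measurable A -> PY A = \int[PX]_(z in A) (L z)%:E) ->
  forall A (c : R), measurable A ->
  \int[PX]_(z in A) ((L z)%:E - c%:E) = PY A - c%:E * PX A.
Proof.
move=> mL L0 hY A c mA.
rewrite (integralB_EFin (f2 := fun=> c)) //.
- by rewrite -hY // (integral_cst PX mA c%:E).
- exact: (@intL _ _ _ PX PY L mL L0 hY A mA).
- exact: finite_measure_integrable_cst.
Qed.

Lemma intcL (d : measure_display) (T : measurableType d) (R : realType)
  (PX PY : probability T R) (L : T -> R) :
  measurable_fun setT L ->
  (forall z, (0 <= L z)%R) ->
  (forall A, measurable A -> PY A = \int[PX]_(z in A) (L z)%:E) ->
  forall A (c : R), measurable A ->
  \int[PX]_(z in A) (c%:E - (L z)%:E) = c%:E * PX A - PY A.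
Proof.
move=> mL L0 hY A c mA.
rewrite (integralB_EFin (f1 := fun=> c)) //.
- by rewrite -hY // (integral_cst PX mA c%:E).
- exact: finite_measure_integrable_cst.
- exact: (@intL _ _ _ PX PY L mL L0 hY A mA).
Qed.

Lemma absY (d : measure_display) (T : measurableType d) (R : realType)
  (PX PY : probability T R) (L : T -> R) :
  measurable_fun setT L ->
  (forall z, (0 <= L z)%R) ->
  (forall A, measurable A -> PY A = \int[PX]_(z in A) (L z)%:E) ->
  forall A, measurable A ->
  `|PY A - PX A| <= \int[PX]_(z in A) `|(L z - 1)%:E|.
Proof.
move=> mL L0 hY A mA.
have := @intLc _ _ _ PX PY L mL L0 hY A 1%R mA.
rewrite mul1e => <-.
under eq_integral do rewrite -EFinB.
apply: le_abse_integral => //.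
apply/measurable_EFinP; apply: measurable_funB; last exact: measurable_cst.
exact: measurable_funS mL.
Qed.

Lemma sup2 (R : realType) (S : set (\bar R)) (D : \bar R) :
  0 <= D -> (forall y, S y -> 0 <= y /\ 2%:E * y <= D) ->
  2%:E * ereal_sup S <= D.
Proof.
move=> D0 hS; case: D D0 hS => [e| |] //= D0 hS; last by rewrite leey.
have : ereal_sup S <= (e / 2)%:E.
  apply: ge_ereal_sup => y /hS [y0]; case: y y0 => [r| |] //= y0.
  - by rewrite -EFinM !lee_fin => h; lra.
  - by rewrite mulry gtr0_sg //= mul1e leye_eq.
move=> h; apply: (le_trans (lee_wpmul2l _ h)) => //.
by rewrite -EFinM lee_fin; lra.
Qed.

Theorem proposition2 (d : measure_display) (T : measurableType d) (R : realType)
  (PX PY : probability T R) (L : T -> R) :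
  PY `<< PX ->
  measurable_fun setT L ->
  (forall z, (0 <= L z)%R) ->
  (forall A, measurable A -> PY A = \int[PX]_(z in A) (L z)%:E) ->
  (forall c : R, PX [set z | L z = c] = 0) ->
  let delta := \int[PX \x PX]_(w in setT) `|(L w.1 - L w.2)%:E| in
  2%:E * dtv PX PY <= delta /\ delta <= 4%:E * dtv PX PY.
Proof.
move=> _ mL L0 hY _ delta.
have mLc (c : R) (D : set T) : measurable_fun D (fun z => `|(L z - c)%:E|).
  apply: measurableT_comp => //; apply/measurable_EFinP.
  apply: measurable_funB; last exact: measurable_cst.
  exact: measurable_funS mL.
have mLx (x : T) : measurable_fun setT (fun y => `|(L x - L y)%:E|).
  apply: measurableT_comp => //; apply/measurable_EFinP.
  by apply: measurable_funB => //; exact: measurable_cst.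
pose M := \int[PX]_(z in setT) `|(L z - 1)%:E|.
have mf : measurable_fun setT (fun w : T * T => `|(L w.1 - L w.2)%:E|).
  apply: measurableT_comp => //; apply/measurable_EFinP.
  apply: measurable_funB.
  - exact: measurableT_comp mL measurable_fst.
  - exact: measurableT_comp mL measurable_snd.
have mF : measurable_fun setT (fun x => \int[PX]_y `|(L x - L y)%:E|).
  exact: (@measurable_fun_fubini_tonelli_F _ _ _ _ _ PX _ mf).
have hdelta : delta = \int[PX]_x \int[PX]_y `|(L x - L y)%:E|.
  by rewrite /delta fubini_tonelli1.
have lowx x : `|(L x - 1)%:E| <= \int[PX]_y `|(L x - L y)%:E|.
  have := @intcL _ _ _ PX PY L mL L0 hY setT (L x) measurableT.
  rewrite !probability_setT mule1 -EFinB => <-.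
  under [X in _ <= X]eq_integral do rewrite EFinB.
  apply: le_abse_integral => //.
  apply/measurable_EFinP; apply: measurable_funB => //; exact: measurable_cst.
have upx x : \int[PX]_y `|(L x - L y)%:E| <= `|(L x - 1)%:E| + M.
  apply: (@le_trans _ _ (\int[PX]_y (`|(L x - 1)%:E| + `|(L y - 1)%:E|))).
    apply: ge0_le_integral => //.
    - by apply: emeasurable_funD => //; exact: measurable_cst.
    move=> y _ /=; rewrite -EFinD lee_fin.
    rewrite (_ : L x - L y = (L x - 1) - (L y - 1))%R; last by ring.
    exact: ler_normB.
  rewrite ge0_integralD //.
  have := integral_cst PX measurableT (`|(L x - 1)%:E|); rewrite /= => ->.
  by rewrite probability_setT mule1.
have Mlow A : measurable A -> 2%:E * `|PY A - PX A| <= M.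
  move=> mA; rewrite /M -(setUCr A) ge0_integral_setU //.
  2: exact: measurableC.
  2: exact/disj_setPCl.
  apply: le_trans; last first.
    apply: leeD; [exact: (@absY _ _ _ PX PY L mL L0 hY A mA)|].
    exact: (@absY _ _ _ PX PY L mL L0 hY (~` A) (measurableC mA)).
  rewrite !probability_setC //.
  rewrite -[PX A]fineK ?fin_num_measure // -[PY A]fineK ?fin_num_measure //.
  set a := fine (PX A); set b := fine (PY A).
  rewrite -!EFinB /= -EFinD -EFinM lee_fin.
  rewrite (_ : (1 - b - (1 - a)) = - (b - a))%R; last by ring.
  by rewrite normrN; lra.
pose A0 := L @^-1` `]1%R, +oo[.
have mA0 : measurable A0.
  by rewrite -[A0]setTI; apply: mL => //; exact: measurable_itv.
have MA0 : M = (PY A0 - PX A0) + (PY A0 - PX A0).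
  rewrite /M -(setUCr A0) ge0_integral_setU //.
  2: exact: measurableC.
  2: exact/disj_setPCl.
  rewrite (eq_integral (fun z => (L z)%:E - 1%:E)); last first.
    move=> z; rewrite inE /A0 /= in_itv andbT => h.
    by rewrite gtr0_norm ?subr_gt0 // EFinB.
  rewrite (@intLc _ _ _ PX PY L mL L0 hY A0 1%R mA0) mul1e.
  rewrite (eq_integral (fun z => 1%:E - (L z)%:E)); last first.
    move=> z; rewrite inE /A0 /= in_itv andbT => /negP; rewrite -leNgt => h.
    by rewrite ler0_norm ?subr_le0 // opprB EFinB.
  rewrite (@intcL _ _ _ PX PY L mL L0 hY (~` A0) 1%R (measurableC mA0)) mul1e.
  rewrite !probability_setC //.
  rewrite -[PX A0]fineK ?fin_num_measure // -[PY A0]fineK ?fin_num_measure //.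
  set a := fine (PX A0); set b := fine (PY A0).
  rewrite -!EFinB -!EFinD; congr EFin; ring.
have Mdelta : M <= delta.
  by rewrite hdelta; apply: ge0_le_integral => // x _; exact: lowx.
have deltaM : delta <= M + M.
  rewrite hdelta; apply: (@le_trans _ _ (\int[PX]_x (`|(L x - 1)%:E| + M))).
    apply: ge0_le_integral => //.
    - by move=> x _; apply: integral_ge0.
    - by apply: emeasurable_funD => //; exact: measurable_cst.
  rewrite ge0_integralD //; last by move=> x _; apply: integral_ge0.
  have := integral_cst PX measurableT M; rewrite /= => ->.
  by rewrite probability_setT mule1.
split.
- rewrite /dtv; apply: sup2.
    by rewrite hdelta; apply: integral_ge0 => x _; apply: integral_ge0.
  move=> y [A mA <-]; split => //.
  exact: le_trans (Mlow A mA) Mdelta.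
- apply: (le_trans deltaM); rewrite MA0.
  have hA : PY A0 - PX A0 <= dtv PX PY.
    apply: le_trans (lee_abs _) _.
    by apply: ereal_sup_ubound; exists A0.
  rewrite -[PX A0]fineK ?fin_num_measure // -[PY A0]fineK ?fin_num_measure //.
  rewrite -[PX A0]fineK ?fin_num_measure // -[PY A0]fineK ?fin_num_measure // in hA.
  set a := fine (PX A0) in hA *; set b := fine (PY A0) in hA *.
  rewrite -!EFinB in hA *.
  rewrite -!EFinD (_ : (b - a + (b - a) + (b - a + (b - a)) = 2 * (2 * (b - a)))%R); last by ring.
  rewrite !EFinM.
  apply: (@le_trans _ _ (2%:E * (2%:E * dtv PX PY))).
  + by apply: lee_wpmul2l => //; apply: lee_wpmul2l.
  + by rewrite muleA -EFinM (_ : (2 * 2 = 4 :> R)%R) //; lra.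
Qed.
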